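(* There is an absolute constant $C>0$ such that the following holds. Let $n\geq 1$, let $a=(a_1,\dots,a_{2n})\in\mathbb{R}^{2n}$, and let $\sigma$ be a uniformly random permutation in the symmetric group $\Pi_{2n}$ of $\{1,\dots,2n\}$. Define $$f(\sigma)=\left|\sum_{i=1}^{n}a_{\sigma(i)}-\sum_{i=n+1}^{2n}a_{\sigma(i)}\right|.$$ Then for every $p\geq 2$, $$\left(\mathbb{E} f^p\right)^{1/p}\leq \mathbb{E}|f|+C\,p\,\|a\|_2,$$ where $\|a\|_2=\left(\sum_{i=1}^{2n}a_i^2\right)^{1/2}$ and $\mathbb{E}$ denotes expectation with respect to the uniform probability measure on $\Pi_{2n}$.
   Context: Equivalently, $\mathbb{E} f^p=\mathbb{E}\left|\sum_{i=1}^{2n}a_i\varepsilon_i\right|^p$ where $\varepsilon=(\varepsilon_1,\dots,\varepsilon_{2n})$ is uniformly distributed on the set $\{\varepsilon\in\{-1,1\}^{2n}:\sum_{i=1}^{2n}\varepsilon_i=0\}$ (Rademacher signs conditioned to sum to zero). *)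

(* Defs.v *)
From Stdlib Require Import Reals.
From mathcomp Require Import all_boot all_fingroup.
Local Open Scope R_scope.
Set Implicit Arguments. Unset Strict Implicit. Unset Printing Implicit Defensive.

(* nonnegative real power x^p for x >= 0, with the convention 0^p = 0 (p > 0) *)
Definition rpow (x p : R) : R :=
  if Rle_dec x 0 then 0 else Rpower x p.

Definition Eperm (m : nat) (F : 'S_m -> R) : R :=
  Rmult (Rinv (INR (factorial m))) (\big[Rplus/0]_(s : 'S_m) F s).

(* f(sigma) = | sum_{i<n} a_{sigma i} - sum_{n<=i<2n} a_{sigma i} |,
   indices shifted to 0,...,2n-1 *)
Definition fsig (n : nat) (a : nat -> R) (s : 'S_(n + n)) : R :=
  Rabs (Rminus (\big[Rplus/0]_(i < n + n | (i < n)%N) a (val (s i)))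
               (\big[Rplus/0]_(i < n + n | (n <= i)%N) a (val (s i)))).

Definition l2norm (m : nat) (a : nat -> R) : R :=
  sqrt (\big[Rplus/0]_(i < m) (a i * a i)).

(* Main.v *)
Require Import Defs.
From Stdlib Require Import Reals Lra.
From HB Require Import structures.
From mathcomp Require Import all_boot all_fingroup.
Local Open Scope R_scope.
Lemma Rplus_A : associative Rplus. Proof. by move=> x y z; rewrite Rplus_assoc. Qed.
Lemma Rmult_A : associative Rmult. Proof. by move=> x y z; rewrite Rmult_assoc. Qed.
HB.instance Definition _ := Monoid.isComLaw.Build R 0 Rplus Rplus_A Rplus_comm Rplus_0_l.
HB.instance Definition _ := Monoid.isComLaw.Build R 1 Rmult Rmult_A Rmult_comm Rmult_1_l.
HB.instance Definition _ := Monoid.isMulLaw.Build R 0 Rmult Rmult_0_l Rmult_0_r.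
HB.instance Definition _ := Monoid.isAddLaw.Build R Rmult Rplus Rmult_plus_distr_r Rmult_plus_distr_l.

Lemma sumR_le (I : finType) (P : pred I) (F G : I -> R) :
  (forall i, P i -> F i <= G i) ->
  \big[Rplus/0]_(i | P i) F i <= \big[Rplus/0]_(i | P i) G i.
Proof.
move=> H; apply: (big_ind2 (fun x y => x <= y)); [lra| |done].
by move=> x1 x2 y1 y2; lra.
Qed.

Lemma sumR_ge0 (I : finType) (P : pred I) (F : I -> R) :
  (forall i, P i -> 0 <= F i) -> 0 <= \big[Rplus/0]_(i | P i) F i.
Proof.
move=> H; apply: (big_ind (fun x => 0 <= x)); [lra| |done].
by move=> x y; lra.
Qed.

Lemma prodR_le (I : finType) (F G : I -> R) :
  (forall i, 0 <= F i <= G i) ->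
  \big[Rmult/1]_i F i <= \big[Rmult/1]_i G i.
Proof.
move=> H.
suff: 0 <= \big[Rmult/1]_i F i <= \big[Rmult/1]_i G i by case.
apply: (big_ind2 (fun x y => 0 <= x <= y)); [lra| |by move=> i _; apply: H].
move=> x1 x2 y1 y2 [h1 h2] [h3 h4]; split; first by apply: Rmult_le_pos.
by apply: Rmult_le_compat.
Qed.

Lemma prodR_gt0 (I : finType) (F : I -> R) :
  (forall i, 0 < F i) -> 0 < \big[Rmult/1]_i F i.
Proof.
move=> H; apply: (big_ind (fun x => 0 < x)); [lra| |by move=> i _; apply: H].
by move=> x y; apply: Rmult_lt_0_compat.
Qed.

Lemma exp_sum (I : finType) (F : I -> R) :
  exp (\big[Rplus/0]_i F i) = \big[Rmult/1]_i exp (F i).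
Proof. by rewrite (big_morph exp exp_plus exp_0). Qed.

Lemma sumR_opp (I : finType) (P : pred I) (F : I -> R) :
  \big[Rplus/0]_(i | P i) (- F i) = - \big[Rplus/0]_(i | P i) F i.
Proof.
by rewrite (big_morph Ropp Ropp_plus_distr Ropp_0).
Qed.

Lemma sumR_scale (I : finType) (P : pred I) (c : R) (F : I -> R) :
  \big[Rplus/0]_(i | P i) (c * F i) = c * \big[Rplus/0]_(i | P i) F i.
Proof. by rewrite big_distrr. Qed.

Lemma cosh_le x : exp x + exp (- x) <= 2 * exp (2 * (x * x)).
Proof.
have e1 := exp_ineq1_le (2 * (x * x)).
have ex := exp_pos x. have enx := exp_pos (- x).
have hexp : exp x * exp (- x) = 1 by rewrite -exp_plus Rplus_opp_r exp_0.
case: (Rle_lt_dec (x * x) (1/2)) => hx.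
- have h1 := exp_ineq1_le x. have h2 := exp_ineq1_le (- x).
  have hx1 : -1 < x < 1 by nra.
  have a1 : exp x * (1 - x) <= 1 by nra.
  have a2 : exp (- x) * (1 + x) <= 1 by nra.
  nra.
- have hle1 : x <= 2 * (x * x) by nra.
  have hle2 : - x <= 2 * (x * x) by nra.
  have := exp_increasing x (2 * (x*x)). have := exp_increasing (-x) (2 * (x*x)).
  move: hle1 hle2 => /Rle_lt_or_eq_dec [h|->] /Rle_lt_or_eq_dec [h'|->]; nra.
Qed.

Section Perm.
Variable n : nat.
Variable a : nat -> R.

Definition swapf (d : {ffun 'I_n -> bool}) (j : 'I_(n + n)) : 'I_(n + n) :=
  match split j with
  | inl i => if d i then rshift n i else lshift n i
  | inr i => if d i then lshift n i else rshift n i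
  end.

Lemma swapfK d : involutive (swapf d).
Proof.
move=> j; rewrite /swapf -{2}(splitK j).
case: (split j) => i; case E: (d i).
- have -> : rshift n i = unsplit (inr i) by []. by rewrite unsplitK E.
- have -> : lshift n i = unsplit (inl i) by []. by rewrite unsplitK E.
- have -> : lshift n i = unsplit (inl i) by []. by rewrite unsplitK E.
- have -> : rshift n i = unsplit (inr i) by []. by rewrite unsplitK E.
Qed.

Definition tau d : 'S_(n + n) := perm (can_inj (swapfK d)).

Definition bb (s : 'S_(n + n)) (i : 'I_n) : R :=
  a (val (s (lshift n i))) - a (val (s (rshift n i))).

Definition SS (s : 'S_(n + n)) : R :=
  \big[Rplus/0]_(i < n + n | (i < n)%N) a (val (s i)) -
  \big[Rplus/0]_(i < n + n | (n <= i)%N) a (val (s i)).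

Lemma SS_split s : SS s = \big[Rplus/0]_i bb s i.
Proof.
rewrite /SS /bb !big_split_ord /=.
rewrite [X in X + _ - _](eq_bigl xpredT); last by move=> i /=; rewrite ltn_ord.
rewrite [X in _ + X - _]big_pred0; last by move=> i /=; rewrite ltnNge leq_addr.
rewrite [X in _ - (X + _)]big_pred0; last by move=> i /=; rewrite leqNgt ltn_ord.
rewrite [X in _ - (_ + X)](eq_bigl xpredT); last by move=> i /=; rewrite leq_addr.
rewrite !Rplus_0_r !Rplus_0_l /Rminus -sumR_opp -big_split /=.
done.
Qed.

Lemma bb_tau d s i : bb ((tau d) * s)%g i = if d i then - bb s i else bb s i.
Proof.
rewrite /bb !permM !permE /swapf.
have -> : split (lshift n i) = inl i by rewrite -[lshift n i]/(unsplit (inl i)) unsplitK.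
have -> : split (rshift n i) = inr i by rewrite -[rshift n i]/(unsplit (inr i)) unsplitK.
case: (d i) => //; lra.
Qed.
End Perm.

Lemma mgf (n : nat) (a : nat -> R) (lam : R) :
  \big[Rplus/0]_(s : 'S_(n + n)) exp (lam * SS n a s) <=
  \big[Rplus/0]_(s : 'S_(n + n))
     exp (\big[Rplus/0]_i (2 * ((lam * bb n a s i) * (lam * bb n a s i)))).
Proof.
set N := \big[Rplus/0]_(d : {ffun 'I_n -> bool}) 1.
have hN : N = \big[Rmult/1]_(i : 'I_n) (1 + 1).
  rewrite /N.
  have := (@bigA_distr_bigA R 0 1 Rmult Rplus 'I_n bool (fun (i : 'I_n) (j : bool) => 1)).
  rewrite /= => E.
  rewrite [X in _ = X](eq_bigr (fun i => \big[Rplus/0]_(j : bool) 1)); last first.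
    by move=> i _; rewrite big_bool.
  rewrite E; apply: eq_bigr => f _; by rewrite big1_eq.
have Npos : 0 < N by rewrite hN; apply: prodR_gt0 => i; lra.
apply: (Rmult_le_reg_l N) => //.
rewrite {1}/N big_distrl /=.
rewrite (eq_bigr (fun d => \big[Rplus/0]_(s : 'S_(n + n)) exp (lam * SS n a ((tau n d) * s)%g))); last first.
  move=> d _; rewrite Rmult_1_l; exact: (reindex_inj (mulgI (tau n d))).
rewrite exchange_big /= big_distrr /=.
apply: sumR_le => s _.
pose H i (j : bool) := exp (lam * (if j then - bb n a s i else bb n a s i)).
rewrite (eq_bigr (fun d : {ffun 'I_n -> bool} => \big[Rmult/1]_i H i (d i))); last first.
  move=> d _; rewrite SS_split -sumR_scale exp_sum; apply: eq_bigr => i _.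
  by rewrite bb_tau.
rewrite -(@bigA_distr_bigA R 0 1 Rmult Rplus 'I_n bool H) /= hN exp_sum -(@big_split R 1 Rmult).
apply: prodR_le => i; rewrite big_bool /H.
split; first by apply: Rplus_le_le_0_compat; apply: Rlt_le; apply: exp_pos.
have := cosh_le (lam * bb n a s i).
rewrite Rplus_comm; have -> : lam * - bb n a s i = - (lam * bb n a s i) by ring.
have e2 : 1 + 1 = 2 by lra.
rewrite e2; exact.
Qed.

Lemma bb_sq (n : nat) (a : nat -> R) s :
  \big[Rplus/0]_i (bb n a s i * bb n a s i) <=
  2 * \big[Rplus/0]_(j < n + n) (a j * a j).
Proof.
apply: (Rle_trans _ (\big[Rplus/0]_i (2 * (a (val (s (lshift n i))) * a (val (s (lshift n i)))
    + a (val (s (rshift n i))) * a (val (s (rshift n i))))))).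
  apply: sumR_le => i _; rewrite /bb.
  set x := a _; set y := a _; have := Rle_0_sqr (x + y); rewrite /Rsqr; nra.
rewrite sumR_scale big_split /=.
rewrite (reindex_inj (@perm_inj _ s)) /= big_split_ord /=.
exact: Rle_refl.
Qed.

Lemma sum_const_perm m c :
  \big[Rplus/0]_(s : 'S_m) c = INR (m`!) * c.
Proof.
rewrite big_const card_Sn; elim: (m`!) => [|k IH]; first by rewrite /=; lra.
rewrite S_INR Rmult_plus_distr_r -IH /=; lra.
Qed.

Lemma exp_le_mono x y : x <= y -> exp x <= exp y.
Proof.
case/Rle_lt_or_eq_dec => [h|->]; last by apply: Rle_refl.
by apply: Rlt_le; apply: exp_increasing.
Qed.

Lemma mgf2 (n : nat) (a : nat -> R) (lam : R) :
  \big[Rplus/0]_(s : 'S_(n + n)) exp (lam * SS n a s) <=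
  INR ((n + n)`!) * exp (4 * (lam * lam) * \big[Rplus/0]_(j < n + n) (a j * a j)).
Proof.
rewrite -sum_const_perm; apply: (Rle_trans _ _ _ (mgf n a lam)).
apply: sumR_le => s _; apply: exp_le_mono.
rewrite (eq_bigr (fun i => (2 * (lam * lam)) * (bb n a s i * bb n a s i))); last first.
  by move=> i _; ring.
rewrite sumR_scale.
have := bb_sq n a s. have := Rle_0_sqr lam. rewrite /Rsqr. nra.
Qed.

Lemma point (L p x : R) : 0 < L -> 2 <= p ->
  rpow (Rabs x) p <= exp (p * ln (2 * p * L) - p) * (exp (/ (2 * L) * x) + exp (/ (2 * L) * - x)).
Proof.
move=> hL hp.
have e1 := exp_pos (/ (2 * L) * x). have e2 := exp_pos (/ (2 * L) * - x).
have e3 := exp_pos (p * ln (2 * p * L) - p).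
rewrite /rpow; case: (Rle_dec (Rabs x) 0) => hx.
  apply: Rmult_le_pos; lra.
have hx' : 0 < Rabs x by lra.
have hpL : 0 < 2 * p * L by nra.
set t := Rabs x / (2 * p * L).
have ht : 0 < t by apply: Rdiv_lt_0_compat.
have hxt : Rabs x = 2 * p * L * t by rewrite /t; field; lra.
have hlt : ln t <= t - 1.
  have := exp_ineq1_le (ln t); rewrite exp_ln //; lra.
have -> : Rpower (Rabs x) p = exp (p * (ln (2 * p * L) + ln t)) by rewrite /Rpower hxt ln_mult.
have hpt : p * t = / (2 * L) * Rabs x by rewrite /t; field; lra.
apply: (Rle_trans _ (exp (p * ln (2 * p * L) - p) * exp (/ (2 * L) * Rabs x))).
  rewrite -exp_plus; apply: exp_le_mono.
  have : p * ln t <= p * (t - 1) by apply: Rmult_le_compat_l; lra.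
  nra.
apply: Rmult_le_compat_l; first lra.
rewrite /Rabs; case: Rcase_abs => _; lra.
Qed.

Lemma fact_INR_pos m : 0 < INR (m`!).
Proof. apply: lt_0_INR; apply/ltP; exact: fact_gt0. Qed.

Lemma Eperm_ge0 m (F : 'S_m -> R) : (forall s, 0 <= F s) -> 0 <= Eperm F.
Proof.
move=> H; rewrite /Eperm; apply: Rmult_le_pos.
  by apply: Rlt_le; apply: Rinv_0_lt_compat; apply: fact_INR_pos.
by apply: sumR_ge0 => s _; apply: H.
Qed.

Lemma ln_le_mono x y : 0 < x -> x <= y -> ln x <= ln y.
Proof.
move=> hx; case/Rle_lt_or_eq_dec => [h|->]; last by apply: Rle_refl.
by apply: Rlt_le; apply: ln_increasing.
Qed.

Theorem theorem1p1 :
  exists C : R, (0 < C) /\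
    forall (n : nat), (1 <= n)%N ->
    forall (a : nat -> R) (p : R), (2 <= p) ->
      (rpow (Eperm (m := n + n) (fun s => rpow (@fsig n a s) p)) (/ p)
        <= Eperm (m := n + n) (fun s => Rabs (@fsig n a s)) + C * p * l2norm (n + n)%nat a).
Proof.
exists 4; split; first lra.
move=> n _ a p hp.
have hE1 : 0 <= Eperm (m := n + n) (fun s => Rabs (@fsig n a s)).
  by apply: Eperm_ge0 => s; apply: Rabs_pos.
set Q := \big[Rplus/0]_(i < n + n) (a i * a i).
have hQ : 0 <= Q by apply: sumR_ge0 => i _; apply: Rle_0_sqr.
rewrite /l2norm -/Q; set L := sqrt Q.
have hL : 0 <= L by apply: sqrt_pos.
suff : rpow (Eperm (m := n + n) (fun s => rpow (@fsig n a s) p)) (/ p) <= 4 * p * L by lra.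
set E := Eperm _.
case/Rle_lt_or_eq_dec: hQ => hQ; last first.
  have ha : forall j : 'I_(n + n), a j = 0.
    move=> j; apply: Rsqr_0_uniq; rewrite /Rsqr.
    have : a j * a j <= Q.
      rewrite /Q (bigD1 j) //=.
      have := @sumR_ge0 _ (fun i => (i != j)) (fun i : 'I_(n + n) => a i * a i) (fun i _ => Rle_0_sqr (a i)).
      rewrite /=; lra.
    have := Rle_0_sqr (a j); rewrite /Rsqr; lra.
  have hf : forall s : 'S_(n + n), @fsig n a s = 0.
    move=> s; rewrite /fsig !big1 ?Rminus_0_r ?Rabs_R0 // => i _; exact: ha.
  have hE : E = 0.
    rewrite /E /Eperm big1; first lra.
    by move=> s _; rewrite hf /rpow; case: Rle_dec => [//|h]; lra.
  rewrite hE /rpow; case: Rle_dec => [h|h]; first by apply: Rmult_le_pos; lra.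
  lra.
have hLp : 0 < L by apply: sqrt_lt_R0.
have hLL : L * L = Q by apply: sqrt_sqrt; lra.
set lam := / (2 * L).
have hlam : 4 * (lam * lam) * Q = 1 by rewrite /lam -hLL; field; lra.
have hlam' : 4 * (- lam * - lam) * Q = 1 by rewrite -hlam; ring.
set K := exp (p * ln (2 * p * L) - p).
have hK : 0 < K by apply: exp_pos.
have hM := fact_INR_pos (n + n).
have hEb : E <= 2 * exp 1 * K.
  rewrite /E /Eperm.
  apply: (Rle_trans _ (/ INR (n + n)`! * \big[Rplus/0]_(s : 'S_(n + n))
     (K * (exp (lam * SS n a s) + exp (- lam * SS n a s))))).
    apply: Rmult_le_compat_l; first by apply: Rlt_le; apply: Rinv_0_lt_compat.
    apply: sumR_le => s _.
    have -> : - lam * SS n a s = lam * - SS n a s by ring.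
    exact: point.
  rewrite sumR_scale big_split /=.
  have h1 := mgf2 n a lam. have h2 := mgf2 n a (- lam).
  rewrite -/Q hlam in h1. rewrite -/Q hlam' in h2.
  have hi : / INR (n + n)`! * INR (n + n)`! = 1 by field; lra.
  have hiv : 0 < / INR (n + n)`! by apply: Rinv_0_lt_compat.
  set A := \big[Rplus/0]_(s : 'S_(n+n)) exp (lam * SS n a s) in h1 *.
  set B := \big[Rplus/0]_(s : 'S_(n+n)) exp (- lam * SS n a s) in h2 *.
  have e1 := exp_pos 1.
  apply: (Rle_trans _ (/ INR (n + n)`! * (K * (INR (n + n)`! * exp 1 + INR (n + n)`! * exp 1)))).
    apply: Rmult_le_compat_l; first lra.
    apply: Rmult_le_compat_l; first lra.
    exact: Rplus_le_compat.
  have -> : / INR (n + n)`! * (K * (INR (n + n)`! * exp 1 + INR (n + n)`! * exp 1))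
     = 2 * exp 1 * K * (/ INR (n + n)`! * INR (n + n)`!) by ring.
  rewrite hi; lra.
rewrite /rpow; case: Rle_dec => hE0; first by apply: Rmult_le_pos; lra.
have hEp : 0 < E by lra.
have hln2 : 0 < ln 2 by rewrite -ln_1; apply: ln_increasing; lra.
have hlnE : ln E <= ln 2 + 1 + (p * ln (2 * p * L) - p).
  apply: (Rle_trans _ (ln (2 * exp 1 * K))); first by apply: ln_le_mono.
  rewrite ln_mult; last by apply: exp_pos. 2: nra.
  rewrite ln_mult ?ln_exp /K ?ln_exp; try lra; apply: exp_pos.
rewrite /Rpower.
have hpinv : 0 < / p by apply: Rinv_0_lt_compat; lra.
have hpp : / p * p = 1 by field; lra.
have hpi : / p <= 1 by nra.
have -> : 4 * p * L = exp (ln 2 + ln (2 * p * L)).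
  rewrite exp_plus !exp_ln; try nra; lra.
apply: exp_le_mono.
apply: (Rle_trans _ (/ p * (ln 2 + 1 + (p * ln (2 * p * L) - p)))).
  by apply: Rmult_le_compat_l; lra.
have -> : / p * (ln 2 + 1 + (p * ln (2 * p * L) - p)) = / p * (ln 2 + 1) + ln (2 * p * L) - 1.
  by field; lra.
nra.
Qed.
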